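(* With $\alpha=(1+\sqrt5)/2$, $$\sum_{k=1}^\infty\frac{1}{5^k(2k-1)(2k)(2k+1)}=\frac12\ln\frac45+\frac{3}{\sqrt5}\ln\alpha-\frac12,$$ $$\sum_{k=1}^\infty\frac{4^k}{5^k(2k-1)(2k)(2k+1)}=-\frac12\ln 5+\frac{27}{4\sqrt5}\ln\alpha-\frac12,$$ $$\sum_{k=1}^\infty\frac{5^k}{9^k(2k-1)(2k)(2k+1)}=\ln\frac23+\frac{14}{3\sqrt5}\ln\alpha-\frac12.$$ *)

(* Defs.v *)
From Stdlib Require Import Reals.
From Coquelicot Require Import Coquelicot.
Open Scope R_scope.

Definition alpha : R := (1 + sqrt 5) / 2.

Definition term (x : R) (k : nat) : R :=
  x ^ k / ((2 * INR k - 1) * (2 * INR k) * (2 * INR k + 1)).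

Definition shifted (x : R) : nat -> R := fun n => term x (S n).

(* Main.v *)
Require Import Defs.
From Stdlib Require Import Reals Lra Lia.
From Coquelicot Require Import Coquelicot.
Open Scope R_scope.

Definition one_s : nat -> R := fun _ => 1.

Lemma CV_one : CV_radius one_s = 1.
Proof.
  rewrite (CV_radius_finite_DAlembert one_s 1).
  - simpl; now rewrite Rinv_1.
  - intros n; unfold one_s; lra.
  - lra.
  - apply is_lim_seq_ext with (fun _ => 1).
    + intros n; unfold one_s; rewrite Rdiv_1_r, Rabs_R1; reflexivity.
    + apply is_lim_seq_const.
Qed.

Lemma PS_one t : Rabs t < 1 -> PSeries one_s t = / (1 - t).
Proof.
  intros Ht. apply is_pseries_unique.
  unfold is_pseries. apply is_series_ext with (fun n => t ^ n).
  - intros n. unfold one_s, scal; simpl. rewrite Rmult_1_r; symmetry; apply pow_n_pow.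
  - now apply is_series_geom.
Qed.

Lemma logser t : Rabs t < 1 ->
  is_series (fun n => t ^ (S n) / INR (S n)) (- ln (1 - t)).
Proof.
  intros Ht.
  set (b := PS_Int one_s).
  assert (Hr : forall y, Rabs y < 1 -> Rbar_lt (Rabs y) (CV_radius b)).
  { intros y Hy. unfold b. rewrite CV_radius_Int, CV_one. simpl. exact Hy. }
  assert (Hb : PSeries b t = - ln (1 - t)).
  { set (h := fun y => PSeries b y + ln (1 - y)).
    assert (Hd : forall c, Rabs (c - 0) <= Rabs t -> is_derive h c 0).
    { intros c Hc. rewrite Rminus_0_r in Hc.
      assert (Hc1 : Rabs c < 1) by lra.
      assert (Hc2 : 0 < 1 - c) by (apply Rabs_def2 in Hc1; lra).
      unfold h.
      replace 0 with (PSeries (PS_derive b) c + (/ (1 - c)) * (-1)).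
      apply (is_derive_plus (PSeries b) (fun y => ln (1 - y))).
      - now apply is_derive_PSeries, Hr.
      - auto_derive; [lra | field; lra].
      - rewrite (PSeries_ext _ one_s).
        + rewrite PS_one; auto. field; lra.
        + intros n. unfold PS_derive, b, PS_Int, one_s. field.
          apply not_0_INR. discriminate. }
    destruct (MVT_cor4 h (fun _ => 0) 0 (Rabs t) Hd t) as [c [Hc _]].
    { rewrite Rminus_0_r; lra. }
    unfold h in Hc. rewrite PSeries_0 in Hc. change (b 0%nat) with 0 in Hc.
    rewrite Rminus_0_r, ln_1 in Hc. lra. }
  rewrite <- Hb.
  assert (Hp : is_pseries b t (PSeries b t)).
  { apply PSeries_correct, CV_radius_inside, Hr, Ht. }
  unfold is_pseries in Hp.
  apply is_series_ext with (fun k => scal (pow_n t (S k)) (b (S k))).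
  - intros n. rewrite pow_n_pow. unfold scal; simpl.
    unfold b, PS_Int, one_s. unfold mult; simpl. unfold Rdiv. ring.
  - apply (is_series_incr_1 (fun k => scal (pow_n t k) (b k))).
    assert (E : plus (PSeries b t) (scal (pow_n t 0) (b 0%nat)) = PSeries b t).
    { change (b 0%nat) with 0. unfold scal, plus; simpl. change (mult one 0) with (1 * 0). ring. }
    rewrite <- E in Hp. exact Hp.
Qed.

Lemma pair_series (u : nat -> R) l : is_series u l ->
  is_series (fun n => u (2*n)%nat + u (S (2*n))) l.
Proof.
  intros H. unfold is_series in *.
  apply filterlim_ext with (fun N => sum_n u (S (2*N))).
  - intros N. induction N as [|N IH].
    + rewrite sum_Sn, !sum_O. reflexivity.
    + replace (2 * S N)%nat with (S (S (2*N))) by lia.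
      rewrite !sum_Sn. rewrite <- (sum_Sn u (2*N)), IH. replace (2 * S N)%nat with (S (S (2*N))) by lia.
      unfold plus; simpl. ring.
  - apply filterlim_comp with eventually.
    + apply eventually_subseq. intros n. lia.
    + exact H.
Qed.

Lemma lin2 a b la lb p q : is_series a la -> is_series b lb ->
  is_series (fun n => p * a n + q * b n) (p * la + q * lb).
Proof.
  intros Ha Hb.
  exact (is_series_plus _ _ _ _ (is_series_scal_l p a la Ha) (is_series_scal_l q b lb Hb)).
Qed.

Lemma podd s n : s ^ (S (2*n)) = s * (s^2)^n.
Proof. rewrite <- pow_mult. reflexivity. Qed.
Lemma peven s n : s ^ (S (S (2*n))) = s^2 * (s^2)^n.
Proof. rewrite <- pow_mult. simpl. ring. Qed.

Definition ell (s : R) (m : nat) : R := s ^ (S m) / INR (S m).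

Lemma INR_odd n : INR (S (2*n)) = 2 * INR n + 1.
Proof. rewrite S_INR, mult_INR. simpl. ring. Qed.
Lemma INR_even n : INR (S (S (2*n))) = 2 * INR n + 2.
Proof. rewrite !S_INR, mult_INR. simpl. ring. Qed.
Lemma INR_pos n : 0 <= INR n.
Proof. apply pos_INR. Qed.

Lemma main t : 0 < t < 1 ->
  let vE := (- ln (1 - t) + ln (1 + t)) / 2 in
  let vO := (- ln (1 - t) - ln (1 + t)) / 2 in
  is_series (shifted (t ^ 2)) (t / 2 * vE - vO + / (2 * t) * (vE - t)).
Proof.
  intros Ht vE vO.
  assert (L1 : is_series (ell t) (- ln (1 - t))) by (apply logser; rewrite Rabs_pos_eq; lra).
  assert (L2 : is_series (ell (-t)) (- ln (1 + t))).
  { replace (1 + t) with (1 - - t) by ring. apply logser. rewrite Rabs_Ropp, Rabs_pos_eq; lra. }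
  set (e := fun n => t * (t ^ 2) ^ n / (2 * INR n + 1)).
  set (o := fun n => t ^ 2 * (t ^ 2) ^ n / (2 * INR n + 2)).
  assert (HE : is_series e vE).
  { pose proof (pair_series _ _ (lin2 _ _ _ _ (/2) (-/2) L1 L2)) as H.
    replace vE with (/2 * - ln (1 - t) + - / 2 * - ln (1 + t)) by (unfold vE; field).
    apply is_series_ext with (2:=H). intros n. unfold e, ell.
    rewrite INR_odd, INR_even, podd, podd, peven, peven.
    replace ((-t)^2) with (t^2) by ring.
    match goal with |- ?a = ?b => change (@eq R a b) end.
    pose proof (INR_pos n). field; lra. }
  assert (HO : is_series o vO).
  { pose proof (pair_series _ _ (lin2 _ _ _ _ (/2) (/2) L1 L2)) as H.
    replace vO with (/2 * - ln (1 - t) + / 2 * - ln (1 + t)) by (unfold vO; field).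
    apply is_series_ext with (2:=H). intros n. unfold o, ell.
    rewrite INR_odd, INR_even, podd, podd, peven, peven.
    replace ((-t)^2) with (t^2) by ring.
    match goal with |- ?a = ?b => change (@eq R a b) end.
    pose proof (INR_pos n). field; lra. }
  assert (HE1 : is_series (fun n => e (S n)) (vE - t)).
  { apply (is_series_incr_1 e).
    match goal with |- is_series _ ?v => replace v with vE end. exact HE.
    unfold e, plus; simpl. field. }
  assert (H3 : is_series (fun n => t / 2 * e n + (-1) * o n) (t / 2 * vE + (-1) * vO))
    by (apply lin2; assumption).
  pose proof (lin2 _ _ _ _ 1 (/ (2 * t)) H3 HE1) as H4.
  replace (t / 2 * vE - vO + / (2 * t) * (vE - t))
    with (1 * (t / 2 * vE + -1 * vO) + / (2 * t) * (vE - t)) by ring.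
  apply is_series_ext with (2:=H4). intros n.
  unfold shifted, term, e, o. rewrite S_INR. simpl pow.
  match goal with |- ?a = ?b => change (@eq R a b) end.
  pose proof (INR_pos n). field; lra.
Qed.

Lemma fin t V : 0 < t < 1 -> 0 < V -> 1 + t = (1 - t) * V ->
  is_series (shifted (t ^ 2)) ((t + / t) / 4 * ln V + ln ((1 - t) * (1 + t)) / 2 - 1 / 2).
Proof.
  intros Ht HV HK.
  pose proof (main t Ht) as H. simpl in H.
  assert (HA : ln (1 + t) = ln (1 - t) + ln V) by (rewrite HK; apply ln_mult; lra).
  rewrite ln_mult by lra.
  match goal with |- is_series _ ?v => replace v with
    (t / 2 * ((- ln (1 - t) + ln (1 + t)) / 2) - (- ln (1 - t) - ln (1 + t)) / 2 +
     / (2 * t) * ((- ln (1 - t) + ln (1 + t)) / 2 - t)) end.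
  exact H.
  rewrite HA. field. lra.
Qed.

Lemma div_zero p q : p = 0 -> p / q = 0.
Proof. intros ->. unfold Rdiv. ring. Qed.

Ltac sv Hs := apply Rminus_diag_uniq; field_simplify; [try apply div_zero; nra | ..]; try lra.

Lemma s_facts : sqrt 5 * sqrt 5 = 5 /\ 2 < sqrt 5.
Proof.
  assert (H : sqrt 5 * sqrt 5 = 5) by (apply sqrt_sqrt; lra).
  split; auto.
  assert (0 < sqrt 5) by (apply sqrt_lt_R0; lra). nra.
Qed.

Lemma alpha_pos : 0 < alpha.
Proof. unfold alpha. destruct s_facts. lra. Qed.

Lemma alpha2 : alpha ^ 2 = (3 + sqrt 5) / 2.
Proof. unfold alpha. destruct s_facts as [H _]. simpl. nra. Qed.
Lemma alpha4 : alpha ^ 4 = (7 + 3 * sqrt 5) / 2.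
Proof. replace 4%nat with (2*2)%nat by reflexivity. rewrite pow_mult, alpha2.
  destruct s_facts as [H _]. simpl. nra. Qed.
Lemma alpha6 : alpha ^ 6 = 9 + 4 * sqrt 5.
Proof. replace 6%nat with (2*3)%nat by reflexivity. rewrite pow_mult, alpha2.
  destruct s_facts as [H _]. assert (H3: sqrt 5 * sqrt 5 * sqrt 5 = 5 * sqrt 5) by (rewrite H; ring). simpl. nra. Qed.

Theorem corollary5 :
  is_series (shifted (1 / 5))
    (1 / 2 * ln (4 / 5) + 3 / sqrt 5 * ln alpha - 1 / 2) /\
  is_series (shifted (4 / 5))
    (- (1 / 2) * ln 5 + 27 / (4 * sqrt 5) * ln alpha - 1 / 2) /\
  is_series (shifted (5 / 9))
    (ln (2 / 3) + 14 / (3 * sqrt 5) * ln alpha - 1 / 2).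
Proof.
  destruct s_facts as [Hs Hs2].
  set (s := sqrt 5) in *.
  assert (Hs0 : 0 < s) by lra.
  pose proof alpha_pos as Ha.
  split; [|split].
  - assert (Ht : 0 < / s < 1).
    { split. apply Rinv_0_lt_compat; lra. apply (Rmult_lt_reg_l s); [lra|]. field_simplify; lra. }
    assert (HK : 1 + / s = (1 - / s) * alpha ^ 2).
    { rewrite alpha2. fold s. sv Hs. }
    pose proof (fin _ _ Ht (pow_lt _ 2 Ha) HK) as H.
    replace ((/ s) ^ 2) with (1/5) in H by (sv Hs).
    match goal with |- is_series _ ?v => replace v with
      ((/ s + / / s) / 4 * ln (alpha ^ 2) + ln ((1 - / s) * (1 + / s)) / 2 - 1 / 2) end.
    exact H.
    rewrite ln_pow by lra.
    replace ((1 - / s) * (1 + / s)) with (4/5) by (sv Hs).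
    replace (/ s + / / s) with (6 / s) by (sv Hs). simpl INR. field. lra.
  - assert (Ht : 0 < 2 / s < 1).
    { split. apply Rdiv_lt_0_compat; lra. apply (Rmult_lt_reg_l s); [lra|]. field_simplify; lra. }
    assert (HK : 1 + 2 / s = (1 - 2 / s) * alpha ^ 6).
    { rewrite alpha6. fold s. sv Hs. }
    pose proof (fin _ _ Ht (pow_lt _ 6 Ha) HK) as H.
    replace ((2 / s) ^ 2) with (4/5) in H by (sv Hs).
    match goal with |- is_series _ ?v => replace v with
      ((2 / s + / (2 / s)) / 4 * ln (alpha ^ 6) + ln ((1 - 2 / s) * (1 + 2 / s)) / 2 - 1 / 2) end.
    exact H.
    rewrite ln_pow by lra.
    replace ((1 - 2 / s) * (1 + 2 / s)) with (/ 5) by (sv Hs).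
    rewrite ln_Rinv by lra.
    replace (2 / s + / (2 / s)) with (9 / (2 * s)) by (sv Hs). simpl INR. field. lra.
  - assert (Hs3 : s < 3) by nra.
    assert (Ht : 0 < s / 3 < 1) by (split; lra).
    assert (HK : 1 + s / 3 = (1 - s / 3) * alpha ^ 4).
    { rewrite alpha4. fold s. sv Hs. }
    pose proof (fin _ _ Ht (pow_lt _ 4 Ha) HK) as H.
    replace ((s / 3) ^ 2) with (5/9) in H by (sv Hs).
    match goal with |- is_series _ ?v => replace v with
      ((s / 3 + / (s / 3)) / 4 * ln (alpha ^ 4) + ln ((1 - s / 3) * (1 + s / 3)) / 2 - 1 / 2) end.
    exact H.
    rewrite ln_pow by lra.
    replace ((1 - s / 3) * (1 + s / 3)) with (2 / 3 * (2 / 3)) by (sv Hs).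
    rewrite ln_mult by lra.
    replace (s / 3 + / (s / 3)) with (14 / (3 * s)) by (sv Hs). simpl INR. field. lra.
Qed.
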